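(* For the single-choice constraint $\mathcal{F}=\{S\subseteq E:|S|\le1\}$, $\textsf{EoR}(\mathcal{F})=\textsf{PbM}(\mathcal{F})$.
   Context: Setting: $E$ is a finite ground set; each $e\in E$ has a nonnegative weight $w_e\sim D_e$, independently, $D=\times_e D_e$. Elements arrive one by one in a fixed order with their realized weights; an online algorithm (knowing $D$, possibly randomized) decides immediately and irrevocably upon each arrival whether to accept, keeping the accepted set in $\mathcal{F}$. $f(\boldsymbol{w})=\max_{S\in\mathcal{F}}\sum_{e\in S}w_e$ (here $=\max_e w_e$); $\boldsymbol{w}(\textsf{ALG}(\boldsymbol{w}))$ is the weight of the set selected by $\textsf{ALG}$. $\textsf{EoR}(\mathcal{F},D,\textsf{ALG})=\mathbf{E}[\boldsymbol{w}(\textsf{ALG}(\boldsymbol{w}))/f(\boldsymbol{w})]$, $\textsf{PbM}(\mathcal{F},D,\textsf{ALG})=\Pr[\boldsymbol{w}(\textsf{ALG}(\boldsymbol{w}))=f(\boldsymbol{w})]$; $\textsf{EoR}(\mathcal{F})=\inf_D\sup_{\textsf{ALG}}\textsf{EoR}(\mathcal{F},D,\textsf{ALG})$ and $\textsf{PbM}(\mathcal{F})=\inf_D\sup_{\textsf{ALG}}\textsf{PbM}(\mathcal{F},D,\textsf{ALG})$, the infima over product distributions. *)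

(* Defs.v *)
From HB Require Import structures.
From mathcomp Require Import all_boot all_order all_algebra.
From mathcomp Require Import all_classical all_reals all_analysis.
Set Implicit Arguments. Unset Strict Implicit. Unset Printing Implicit Defensive.
Import Order.TTheory GRing.Theory Num.Theory.
Local Open Scope classical_set_scope.
Local Open Scope ring_scope.

(* Ground set E = 'I_n, elements arrive in the order 0, 1, ..., n-1. *)

(* f(w) = max_e w_e  (weights are nonnegative, so 0 is a neutral start). *)
Definition fmax (R : realType) (n : nat) (x : 'I_n -> R) : R :=
  \big[Num.max/0]_(e < n) x e.

(* An online (randomized) single-choice algorithm is given by decision rules
   dec i s x : "accept element i if it is still possible", where s is the
   algorithm's random seed and x the vector of weights; the rule may only
   look at x_0, ..., x_i (online constraint, see [online]).  The algorithm
   selects the first element i whose rule says accept (after that nothing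
   more can be accepted, by feasibility). *)
Definition online (R : realType) (n : nat) (S : Type)
  (dec : 'I_n -> S -> ('I_n -> R) -> bool) : Prop :=
  forall (i : 'I_n) (s : S) (x y : 'I_n -> R),
    (forall j : 'I_n, (j <= i)%N -> x j = y j) -> dec i s x = dec i s y.

Definition chosen (R : realType) (n : nat) (S : Type)
  (dec : 'I_n -> S -> ('I_n -> R) -> bool) (s : S) (x : 'I_n -> R)
  : option 'I_n :=
  [pick i : 'I_n | dec i s x && [forall j : 'I_n, (j < i)%N ==> ~~ dec j s x]].

Definition alg_value (R : realType) (n : nat) (S : Type)
  (dec : 'I_n -> S -> ('I_n -> R) -> bool) (s : S) (x : 'I_n -> R) : R :=
  match chosen dec s x with Some i => x i | None => 0 end.

(* w(ALG(w)) / f(w), with the convention 0/0 = 1 (ALG is optimal when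
   f(w) = 0). *)
Definition ratio (R : realType) (n : nat) (x : 'I_n -> R) (v : R) : R :=
  if fmax x == 0 then 1 else v / fmax x.

(* (T, P, w) realizes a product distribution D = x_e D_e of nonnegative
   weights: the w_e are measurable, nonnegative and mutually independent. *)
Definition product_weights (R : realType) (n : nat) d (T : measurableType d)
  (P : probability T R) (w : 'I_n -> T -> R) : Prop :=
  (forall e, measurable_fun setT (w e)) /\
  (forall e t, 0 <= w e t) /\
  (forall B : 'I_n -> set R, (forall e, measurable (B e)) ->
     fine (P [set t | forall e, B e (w e t)]) =
     \prod_(e < n) fine (P (w e @^-1` B e))).

(* Admissible randomized online algorithms for the weights w: a seed space
   (S, Q) independent of the weights, online decision rules, measurable. *)
Definition admissible_alg (R : realType) (n : nat) d (T : measurableType d)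
  (w : 'I_n -> T -> R) d' (S : measurableType d')
  (dec : 'I_n -> S -> ('I_n -> R) -> bool) : Prop :=
  online dec /\
  (forall i : 'I_n, measurable [set z : S * T | dec i z.1 (fun j => w j z.2)]).

Definition EoR_D (R : realType) (n : nat) d (T : measurableType d)
  (P : probability T R) (w : 'I_n -> T -> R) : \bar R :=
  ereal_sup [set v : \bar R | exists d' (S : measurableType d')
     (Q : probability S R) (dec : 'I_n -> S -> ('I_n -> R) -> bool),
     admissible_alg w dec /\
     v = (\int[Q \x P]_z
            (ratio (fun j => w j z.2)
                   (alg_value dec z.1 (fun j => w j z.2)))%:E)%E].

Definition PbM_D (R : realType) (n : nat) d (T : measurableType d)
  (P : probability T R) (w : 'I_n -> T -> R) : \bar R :=
  ereal_sup [set v : \bar R | exists d' (S : measurableType d')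
     (Q : probability S R) (dec : 'I_n -> S -> ('I_n -> R) -> bool),
     admissible_alg w dec /\
     v = ((Q \x P) [set z | alg_value dec z.1 (fun j => w j z.2)
                           = fmax (fun j => w j z.2)])%E].

Definition EoR_single (R : realType) (n : nat) : \bar R :=
  ereal_inf [set v : \bar R | exists d (T : measurableType d)
     (P : probability T R) (w : 'I_n -> T -> R),
     product_weights P w /\ v = EoR_D P w].

Definition PbM_single (R : realType) (n : nat) : \bar R :=
  ereal_inf [set v : \bar R | exists d (T : measurableType d)
     (P : probability T R) (w : 'I_n -> T -> R),
     product_weights P w /\ v = PbM_D P w].

(* Main.v *)
Require Import Defs.
From HB Require Import structures.
From mathcomp Require Import all_boot all_order all_algebra.
From mathcomp Require Import all_classical all_reals all_analysis.
From mathcomp Require Import measurable_realfun lra.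
Set Implicit Arguments. Unset Strict Implicit. Unset Printing Implicit Defensive.
Import Order.TTheory GRing.Theory Num.Theory.
Local Open Scope classical_set_scope.
Local Open Scope ring_scope.

Section fm.
Variables (R : realType) (n : nat).
Implicit Types x : 'I_n -> R.

Lemma fmax_ge0 x : 0 <= fmax x.
Proof. rewrite /fmax; elim/big_rec: _ => // i y _ hy; by rewrite le_max hy orbT. Qed.

Lemma fmax_ub x j : x j <= fmax x.
Proof.
rewrite /fmax (bigD1 j) //=; by rewrite le_max lexx.
Qed.

Lemma fmax_attain x : fmax x = 0 \/ exists j, fmax x = x j.
Proof.
rewrite /fmax; elim/big_ind: _ => //; first by left.
- by move=> a b ha hb; case: (leP a b).
- by move=> j _; right; exists j.
Qed.
End fm.

Lemma int_mono (R : realType) d (T : measurableType d) (mu : {measure set T -> \bar R})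
  (f g : T -> \bar R) : (forall x, (0 <= f x)%E) -> (forall x, (f x <= g x)%E) ->
  (\int[mu]_x f x <= \int[mu]_x g x)%E.
Proof.
move=> f0 fg.
have g0 : forall x, (0 <= g x)%E by move=> x; exact: (le_trans (f0 x) (fg x)).
rewrite !ge0_integralTE //; apply: ereal_sup_le.
move=> _ [h hf <-]; exists h => //= x; exact: (le_trans (hf x) (fg x)).
Qed.
Lemma chosen_someP (R : realType) (n : nat) (S : Type)
  (dec : 'I_n -> S -> ('I_n -> R) -> bool) s x i :
  chosen dec s x = Some i <-> (dec i s x /\ forall j : 'I_n, (j < i)%N -> ~~ dec j s x).
Proof.
rewrite /chosen; case: pickP => [k /andP[dk /forallP hk] | H].
- split; first by case=> <-; split => // j ji; exact: (implyP (hk j)).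
  case=> di hi; congr Some.
  case: (ltngtP k i) => [ki|ik|/val_inj //].
  + by move: (hi k ki); rewrite dk.
  + by move: (implyP (hk i) ik); rewrite di.
- split => // -[di hi]; move: (H i); rewrite di /=.
  move/negbT/negP => HH; exfalso; apply: HH; apply/forallP => j; apply/implyP; exact: hi.
Qed.

Section meas.
Variables (R : realType) (n : nat) (dT dS : measure_display)
  (T : measurableType dT) (S : measurableType dS).

Lemma meas_eq d (Z : measurableType d) (f g : Z -> R) :
  measurable_fun setT f -> measurable_fun setT g -> measurable [set z | f z = g z].
Proof.
move=> mf mg; have := measurable_fun_eqr mf mg measurableT (I : measurable [set true]).
rewrite setTI; congr measurable; apply/seteqP; split => z /=.
- by move/eqP.
- by move=> ->; rewrite eqxx.
Qed.

Lemma meas_fmax d (Z : measurableType d) (X : 'I_n -> Z -> R) :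
  (forall e, measurable_fun setT (X e)) ->
  measurable_fun setT (fun z => fmax (fun j => X j z)).
Proof.
move=> mX; rewrite /fmax.
suff H : forall r, measurable_fun setT (fun z => \big[Num.max/0]_(e <- r) X e z) by exact: H.
elim => [|a r ih].
  by under eq_fun do rewrite big_nil; exact: measurable_cst.
by under eq_fun do rewrite big_cons; exact: measurable_maxr.
Qed.

Variables (X : 'I_n -> T -> R) (dec : 'I_n -> S -> ('I_n -> R) -> bool).
Hypothesis mX : forall e, measurable_fun setT (X e).
Hypothesis mdec : forall i : 'I_n, measurable [set z : S * T | dec i z.1 (fun j => X j z.2)].

Let C i := [set z : S * T | chosen dec z.1 (fun j => X j z.2) = Some i].

Lemma measC i : measurable (C i).
Proof.
have -> : C i = [set z : S * T | dec i z.1 (fun j => X j z.2)] `&`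
   \bigcap_(j in [set j : 'I_n | (j < i)%N]) ~` [set z : S * T | dec j z.1 (fun j => X j z.2)].
  apply/seteqP; split => z; rewrite /C /= chosen_someP.
  - by case=> di hi; split => // j /= ji; apply/negP/hi.
  - by case=> di hi; split => // j ji; apply/negP; exact: (hi j ji).
apply: measurableI => //; apply: fin_bigcap_measurable; first exact: finite_finset.
by move=> j _; apply: measurableC.
Qed.

Lemma meas_succ : measurable [set z : S * T |
  alg_value dec z.1 (fun j => X j z.2) = fmax (fun j => X j z.2)].
Proof.
have mX2 : forall e, measurable_fun setT (fun z : S * T => X e z.2).
  by move=> e; apply: measurableT_comp => //; exact: measurable_snd.
have -> : [set z : S * T |
  alg_value dec z.1 (fun j => X j z.2) = fmax (fun j => X j z.2)] =
  \bigcup_(i in setT) (C i `&` [set z | X i z.2 = fmax (fun j => X j z.2)]) `|`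
  (~` (\bigcup_(i in setT) C i) `&` [set z | 0 = fmax (fun j => X j z.2)]).
  apply/seteqP; split => z; rewrite /C /alg_value /=.
  - case E: chosen => [i|] h.
    + by left; exists i.
    + right; split => //; by case=> i _ /=; rewrite E.
  - case.
    + case=> k _ /= [Ck Xk]; move: Ck; rewrite /C /= => ->; exact: Xk.
    + case=> H1 H2; case E: chosen => [k|] //; exfalso; apply: H1; by exists k.
apply: measurableU.
  apply: fin_bigcup_measurable; first exact: finite_finset.
  move=> i _; apply: measurableI; first exact: measC.
  by apply: meas_eq => //; exact: meas_fmax.
apply: measurableI.
  apply: measurableC; apply: fin_bigcup_measurable; first exact: finite_finset.
  by move=> *; exact: measC.
apply: meas_eq; first exact: measurable_cst.
exact: meas_fmax.
Qed.
End meas.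

Lemma alg_value_ge0 (R : realType) (n : nat) (S : Type)
  (dec : 'I_n -> S -> ('I_n -> R) -> bool) s x :
  (forall j, 0 <= x j) -> 0 <= alg_value dec s x.
Proof. by move=> x0; rewrite /alg_value; case: chosen. Qed.

Lemma ratio_ge0 (R : realType) (n : nat) (x : 'I_n -> R) (v : R) :
  0 <= v -> 0 <= Defs.ratio x v.
Proof. by move=> v0; rewrite /Defs.ratio; case: ifP => // _; rewrite divr_ge0 // fmax_ge0. Qed.

Lemma PbM_le_EoR (R : realType) (n : nat) d (T : measurableType d)
  (P : probability T R) (w : 'I_n -> T -> R) :
  product_weights P w -> (PbM_D P w <= EoR_D P w)%E.
Proof.
case=> mw [w0 _].
apply: ge_ereal_sup => _ [d' [S [Q [dec [[onl mdec] ->]]]]].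
apply: le_ereal_sup_tmp; eexists; first by exists d', S, Q, dec.
have mS := meas_succ mw mdec.
rewrite -[X in (_ X <= _)%E]setIT -integral_indic //.
apply: int_mono => z; first by rewrite lee_fin.
rewrite lee_fin indicE; case: (boolP (z \in _)) => h.
- move: h; rewrite inE /= => h; rewrite /Defs.ratio h; case: ifP => // /negbT f0.
  by rewrite divff.
- by apply: ratio_ge0; apply: alg_value_ge0.
Qed.

Lemma pw (R : realType) (n : nat) (c δ : R) (x : 'I_n -> R) (k : option 'I_n) :
  0 < c -> 0 < δ -> (forall j, 0 <= x j) ->
  Defs.ratio (fun j => expR (c * x j)) (match k with Some i => expR (c * x i) | None => 0 end) <=
  (`[< match k with Some i => x i | None => 0 end = fmax x >])%:R
  + (`[< exists a b : 'I_n, 0 < x b - x a < δ >])%:R + expR (-(c*δ)).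
Proof.
move=> c0 d0 x0.
set y := fun j => expR (c * x j).
have e0 : 0 <= expR (-(c*δ)) by exact/ltW/expR_gt0.
have b0 (P : Prop) : 0 <= (`[< P >])%:R :> R by [].
have yub j : expR (c * x j) <= fmax y := fmax_ub y j.
rewrite /Defs.ratio; case: ifP => [/eqP f0 | /negbT f0].
-
  have Hk : k = None.
    case: k => // i; have := yub i; rewrite f0 => h.
    by have := expR_gt0 (c * x i); rewrite ltNge h.
  have Hf : fmax x = 0.
    case: (fmax_attain x) => // -[j hj]; have := yub j; rewrite f0 => h.
    by have := expR_gt0 (c * x j); rewrite ltNge h.
  rewrite Hk Hf asboolT //= -addrA lerDl; exact: addr_ge0.
- have fpos : 0 < fmax y by rewrite lt_def f0 fmax_ge0.
  case: k => [i|]; last first.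
    by rewrite mul0r; apply: addr_ge0 => //; exact: addr_ge0.
  have r1 : expR (c * x i) / fmax y <= 1 by rewrite ler_pdivrMr // mul1r.
  have [hi|hi] := pselect (x i = fmax x).
    rewrite asboolT //; apply: (le_trans r1); rewrite -addrA lerDl; exact: addr_ge0.
  case: (fmax_attain x) => [hf|[b hb]].
    by exfalso; apply: hi; rewrite hf; apply/le_anti; rewrite x0 andbT -hf fmax_ub.
  have xib : x i < x b by rewrite lt_def -hb (fmax_ub x i) andbT; apply/eqP => h; apply: hi; rewrite h.
  have [hd|hd] := boolP (x b - x i < δ).
    rewrite (asboolT (_ : exists a b : 'I_n, 0 < x b - x a < δ)); last first.
      by exists i, b; rewrite subr_gt0 xib hd.
    apply: (le_trans r1); have := b0 (x i = fmax x); rewrite /= ; lra.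
  rewrite -leNgt in hd.
  have h1 : expR (c * x i) <= expR (-(c*δ)) * fmax y.
    apply: (le_trans _ (ler_wpM2l e0 (yub b))).
    rewrite -expRD ler_expR; nra.
  have h2 : expR (c * x i) / fmax y <= expR (-(c*δ)) by rewrite ler_pdivrMr.
  apply: (le_trans h2); have := b0 (x i = fmax x);
    have := b0 (exists a b : 'I_n, 0 < x b - x a < δ); rewrite /=; lra.
Qed.
Lemma small_prob (R : realType) d (T : measurableType d) (P : probability T R)
  (F : nat -> set T) : (forall m, measurable (F m)) -> nonincreasing_seq F ->
  \bigcap_m F m = set0 -> forall e : R, 0 < e -> exists m, (P (F m) <= e%:E)%E.
Proof.
move=> mF ni H e e0.
have hc := @nonincreasing_cvg_mu _ _ _ P F
  (le_lt_trans (probability_le1 P (mF 0%N)) (ltey _)) mF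
  (ltac:(rewrite H; exact: measurable0)) ni.
rewrite H measure0 in hc.
have hn : nbhs (0%:E : \bar R) [set y | (y < e%:E)%E].
  apply/nbhs_EFin; exact: lt_nbhsl.
have := hc _ hn.
case=> N _ HN; exists N; apply/ltW/HN => /=; exact: leqnn.
Qed.

Section Dprime.
Variables (R : realType) (n : nat) (d : measure_display) (T : measurableType d)
  (P : probability T R) (w : 'I_n -> T -> R) (c δ : R).
Hypothesis pwD : product_weights P w.
Hypothesis c0 : 0 < c.
Hypothesis δ0 : 0 < δ.

Let w' := fun e t => expR (c * w e t).
Let B := [set t | exists a b : 'I_n, 0 < w b t - w a t < δ].

Let mphi : measurable_fun setT (fun x : R => expR (c * x)).
Proof.
apply: measurableT_comp; first exact: measurable_expR.
by apply: measurable_funM; [exact: measurable_cst | exact: measurable_id].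
Qed.

Lemma pw_w' : product_weights P w'.
Proof.
case: pwD => mw [w0 hind]; split; [|split].
- move=> e; exact: (measurableT_comp mphi (mw e)).
- by move=> e t; exact/ltW/expR_gt0.
- move=> Bs mBs.
  have mB' e : measurable ((fun x : R => expR (c * x)) @^-1` Bs e).
    by rewrite -[X in measurable X]setTI; exact: mphi.
  exact: (hind _ mB').
Qed.

Lemma measB : measurable B.
Proof.
case: pwD => mw _.
have -> : B = \bigcup_(a in setT) \bigcup_(b in setT)
   ((fun t => w b t - w a t) @^-1` `]0, δ[).
  apply/seteqP; split => t /=.
  - by case=> a [b h]; exists a => //; exists b => //=; rewrite in_itv.
  - by case=> a _ [b _] /=; rewrite in_itv /= => h; exists a, b.
apply: fin_bigcup_measurable; first exact: finite_finset.
move=> a _; apply: fin_bigcup_measurable; first exact: finite_finset.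
move=> b _; rewrite -[X in measurable X]setTI.
by apply: measurable_funB => //.
Qed.

Lemma EoR_w'_le :
  (EoR_D P w' <= PbM_D P w + P B + (expR (-(c*δ)))%:E)%E.
Proof.
case: pwD => mw [w0 _].
apply: ge_ereal_sup => _ [d' [S [Q [dec' [[onl' mdec'] ->]]]]].
pose dec i s (x : 'I_n -> R) := dec' i s (fun j => expR (c * x j)).
have adm : admissible_alg w dec.
  split; last exact: mdec'.
  move=> i s x y hxy; rewrite /dec; apply: onl' => j ji; by rewrite hxy.
set Succ := [set z : S * T | alg_value dec z.1 (fun j => w j z.2) = fmax (fun j => w j z.2)].
have mS : measurable Succ := meas_succ mw adm.2.
have hP : ((Q \x P)%E Succ <= PbM_D P w)%E.
  by apply: ereal_sup_ubound; exists d', S, Q, dec.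
have mB' : measurable (snd @^-1` B : set (S * T)).
  by rewrite -[X in measurable X]setTI; apply: measurable_snd => //; exact: measB.
have hB : (Q \x P)%E (snd @^-1` B) = P B.
  have -> : (snd @^-1` B : set (S * T)) = setT `*` B.
    by apply/seteqP; split => z /=; [move=> h; split|case].
  rewrite product_measure1E //; last exact: measB.
  match goal with |- ?G => idtac G end.
  match goal with |- ((?X * _)%E = _) => have -> : X = 1%E by exact: probability_setT end.
  by rewrite mul1e.
set e := expR (-(c*δ)).
apply: (@le_trans _ _ (\int[(Q \x P)%E]_z ((\1_Succ z)%:E + (\1_(snd @^-1` B) z)%:E + (cst e%:E) z))%E).
  apply: int_mono => z.
    by rewrite lee_fin; apply: ratio_ge0; apply: alg_value_ge0 => j; exact/ltW/expR_gt0.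
  rewrite /= -!EFinD lee_fin !indicE.
  exact: (pw (chosen dec' z.1 (fun j => expR (c * w j z.2))) c0 δ0 (fun j => w0 j z.2)).
have mi (A : set (S * T)) : measurable A -> measurable_fun setT (fun z => (\1_A z)%:E : \bar R).
  by move=> mA; apply/measurable_EFinP; exact: measurable_indic.
have i0 (A : set (S * T)) z : (0 <= (\1_A z)%:E :> \bar R)%E by rewrite lee_fin.
rewrite ge0_integralD //; last 3 first.
- by move=> z _; apply: adde_ge0.
- by apply: emeasurable_funD; apply: mi.
- by move=> z _; rewrite /= lee_fin; exact/ltW/expR_gt0.
rewrite ge0_integralD //; last 2 first.
- exact: mi.
- exact: mi.
rewrite !integral_indic // !setIT integral_cst //.
match goal with |- context [(_ * ?X)%E] => have -> : X = 1%E by exact: probability_setT end.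
rewrite mule1; apply: leeD => //; apply: leeD => //.
by rewrite le_eqVlt; apply/orP; left; apply/eqP; exact: hB.
Qed.
End Dprime.
Theorem proposition3 (R : realType) (n : nat) :
  EoR_single R n = PbM_single R n.
Proof.
apply/le_anti/andP; split; last first.
  apply: le_ereal_inf_tmp => _ [d [T [P [w [pwD ->]]]]].
  apply: le_trans (PbM_le_EoR pwD); apply: ereal_inf_lbound; by exists d, T, P, w.
apply: le_ereal_inf_tmp => _ [d [T [P [w [pwD ->]]]]].
apply/lee_addgt0Pr => eps eps0.
pose F m := [set t | exists a b : 'I_n, 0 < w b t - w a t < (m.+1%:R : R)^-1].
have mF m : measurable (F m) := measB _ pwD.
have ni : nonincreasing_seq F.
  move=> m k mk; apply/subsetPset => t [a [b /andP[h1 h2]]]; exists a, b.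
  rewrite h1 /=; apply: (lt_le_trans h2).
  by rewrite lef_pV2 ?posrE // ler_nat.
have cap : \bigcap_m F m = set0.
  apply/seteqP; split => t // Ht.
  pose mm a b := Num.truncn ((w b t - w a t)^-1).
  pose M := (\sum_(a < n) \sum_(b < n) mm a b)%N.
  have [a [b /andP[h1 h2]]] := Ht M I.
  have hM : (mm a b <= M)%N.
    apply: (@leq_trans (\sum_(b0 < n) mm a b0)%N).
      by rewrite (bigD1 b) //=; exact: ssrnat.leq_addr.
    by rewrite /M [X in (_ <= X)%N](bigD1 a) //=; exact: ssrnat.leq_addr.
  have t1 := truncnS_gt ((w b t - w a t)^-1).
  have t2 : ((mm a b).+1%:R <= M.+1%:R :> R) by rewrite ler_nat.
  have t3 : (w b t - w a t)^-1 < M.+1%:R := lt_le_trans t1 t2.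
  have : (M.+1%:R : R)^-1 < w b t - w a t.
    by rewrite -[X in _ < X]invrK ltf_pV2 ?posrE ?invr_gt0.
  by rewrite ltNge (ltW h2).
have eps2 : 0 < eps / 2 by rewrite divr_gt0.
have [m hm] := small_prob P mF ni cap eps2.
pose δ := (m.+1%:R : R)^-1.
pose c := (2 / eps) * m.+1%:R.
have δ0 : 0 < δ by rewrite /δ invr_gt0.
have c0 : 0 < c by rewrite /c mulr_gt0 // divr_gt0.
have cd : c * δ = 2 / eps by rewrite /c /δ mulfK // pnatr_eq0.
apply: (@le_trans _ _ (EoR_D P (fun e t => expR (c * w e t)))).
  apply: ereal_inf_lbound; exists d, T, P, (fun e t => expR (c * w e t)); split => //.
  exact: pw_w'.
apply: le_trans (EoR_w'_le pwD c0 δ0) _.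
rewrite -addeA; apply: leeD => //.
rewrite (splitr eps) EFinD; apply: leeD; first exact: hm.
rewrite lee_fin cd expRN.
have h2 : 0 < 2 / eps by rewrite divr_gt0.
have -> : eps / 2 = (2 / eps)^-1 by rewrite invf_div.
rewrite lef_pV2 ?posrE ?expR_gt0 //.
apply: le_trans (expR_ge1Dx _); rewrite lerDr //.
Qed.
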